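(* There is an absolute constant $c_1>0$ such that for each $b\in(0,\pi]$, each $n\in\mathbb{N}$ and every trigonometric polynomial $T_n\in\mathcal{T}_n$, $$\|F_1-T_n\|_{[-b,b]}\ge \frac{c_1 b}{n},$$ where $F_1(x)=|x|$. Moreover one can take $c_1\ge (80c_0)^{-1}$, where $c_0<10$ is an absolute constant such that $\|T_n'\|_{[-b/2,b/2]}\le \frac{c_0}{b}n\|T_n\|_{[-b,b]}$ for all $b\in(0,\pi)$, $n\in\mathbb{N}$ and all odd $T_n\in\mathcal{T}_n$.
   Context: $\mathcal{T}_n$ is the space of real trigonometric polynomials of degree $\le n$. For a function $g$ on $[a,b]$, $\|g\|_{[a,b]}:=\max_{x\in[a,b]}|g(x)|$. *)

(* Defs.v *)
From Stdlib Require Import Reals.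
From Coquelicot Require Import Coquelicot.
Open Scope R_scope.

(* T is a real trigonometric polynomial of degree <= n:
   T x = a_0 + sum_{k=1}^n (a_k cos (k x) + b_k sin (k x)).
   (The k = 0 term of the sum below is a 0 * cos 0 + b 0 * sin 0 = a 0.) *)
Definition trig_poly (n : nat) (T : R -> R) : Prop :=
  exists a b : nat -> R, forall x : R,
    T x = sum_f_R0 (fun k => a k * cos (INR k * x) + b k * sin (INR k * x)) n.

Definition supnorm (g : R -> R) (a b : R) : R :=
  real (Lub_Rbar (fun y => exists x, a <= x <= b /\ y = Rabs (g x))).

Definition odd_fun (T : R -> R) : Prop := forall x, T (- x) = - T x.

Definition bernstein_const (c0 : R) : Prop :=
  forall (b : R) (n : nat) (T : R -> R),
    0 < b < PI -> (1 <= n)%nat -> trig_poly n T -> odd_fun T ->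
    supnorm (Derive T) (- b / 2) (b / 2) <= c0 / b * INR n * supnorm T (- b) b.

(* Main.v *)
Require Import Defs.
From Stdlib Require Import Reals Lra Lia List.
From Coquelicot Require Import Coquelicot.
Open Scope R_scope.

Lemma supnorm_ge (g : R -> R) (a b M x : R) :
  (forall y, a <= y <= b -> Rabs (g y) <= M) -> a <= x <= b ->
  Rabs (g x) <= supnorm g a b.
Proof.
  intros HM Hx. unfold supnorm.
  destruct (Lub_Rbar_correct (fun y => exists x, a <= x <= b /\ y = Rabs (g x))) as [Hub Hl].
  assert (H1 : Rbar_le (Lub_Rbar (fun y => exists x, a <= x <= b /\ y = Rabs (g x))) (Finite M)).
  { apply Hl. intros y [z [Hz ->]]. simpl. now apply HM. }
  assert (H2 : Rbar_le (Finite (Rabs (g x))) (Lub_Rbar (fun y => exists x, a <= x <= b /\ y = Rabs (g x)))).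
  { apply Hub. exists x; split; auto. }
  destruct (Lub_Rbar _); simpl in *; tauto.
Qed.

Lemma supnorm_le (g : R -> R) (a b M : R) :
  a <= b -> (forall y, a <= y <= b -> Rabs (g y) <= M) -> supnorm g a b <= M.
Proof.
  intros Hab HM. unfold supnorm.
  destruct (Lub_Rbar_correct (fun y => exists x, a <= x <= b /\ y = Rabs (g x))) as [Hub Hl].
  assert (H1 : Rbar_le (Lub_Rbar (fun y => exists x, a <= x <= b /\ y = Rabs (g x))) (Finite M)).
  { apply Hl. intros y [z [Hz ->]]. simpl. now apply HM. }
  assert (H2 : Rbar_le (Finite (Rabs (g a))) (Lub_Rbar (fun y => exists x, a <= x <= b /\ y = Rabs (g x)))).
  { apply Hub. exists a; split; auto; lra. }
  destruct (Lub_Rbar _); simpl in *; tauto.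
Qed.

Lemma trig_bounded n T : trig_poly n T -> exists M, forall x, Rabs (T x) <= M.
Proof.
  intros [a [b H]]. exists (sum_f_R0 (fun k => Rabs (a k) + Rabs (b k)) n).
  intro x. rewrite H. eapply Rle_trans. apply Rabs_triang_gen.
  apply sum_Rle. intros k _. eapply Rle_trans. apply Rabs_triang.
  rewrite !Rabs_mult. apply Rplus_le_compat.
  - rewrite <- (Rmult_1_r (Rabs (a k))) at 2. apply Rmult_le_compat_l. apply Rabs_pos.
    apply Rabs_le. apply COS_bound.
  - rewrite <- (Rmult_1_r (Rabs (b k))) at 2. apply Rmult_le_compat_l. apply Rabs_pos.
    apply Rabs_le. apply SIN_bound.
Qed.

Lemma trig_lin n f g p q : trig_poly n f -> trig_poly n g ->
  trig_poly n (fun x => p * f x + q * g x).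
Proof.
  intros [a [b Hf]] [a' [b' Hg]].
  exists (fun k => p * a k + q * a' k), (fun k => p * b k + q * b' k).
  intro x. rewrite Hf, Hg, !scal_sum, <- sum_plus. apply sum_eq. intros; ring.
Qed.

Lemma trig_neg n f : trig_poly n f -> trig_poly n (fun x => f (- x)).
Proof.
  intros [a [b Hf]]. exists a, (fun k => - b k). intro x. rewrite Hf. apply sum_eq.
  intros k _. replace (INR k * - x) with (- (INR k * x)) by ring.
  rewrite cos_neg, sin_neg. ring.
Qed.

Lemma trig_shift n f c : trig_poly n f -> trig_poly n (fun x => f (x + c)).
Proof.
  intros [a [b Hf]].
  exists (fun k => a k * cos (INR k * c) + b k * sin (INR k * c)),
         (fun k => - a k * sin (INR k * c) + b k * cos (INR k * c)).
  intro x. rewrite Hf. apply sum_eq.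
  intros k _. replace (INR k * (x + c)) with (INR k * x + INR k * c) by ring.
  rewrite cos_plus, sin_plus. ring.
Qed.

Lemma trig_deriv n f : trig_poly n f ->
  exists f', trig_poly n f' /\ forall x, is_derive f x (f' x).
Proof.
  intros [a [b Hf]].
  exists (fun x => sum_f_R0 (fun k => (INR k * b k) * cos (INR k * x) + (- INR k * a k) * sin (INR k * x)) n).
  split. { exists (fun k => INR k * b k), (fun k => - INR k * a k). reflexivity. }
  intro x. apply (is_derive_ext (fun x => sum_f_R0 (fun k => a k * cos (INR k * x) + b k * sin (INR k * x)) n)).
  { intro; now rewrite Hf. }
  clear Hf. induction n as [|n IH].
  - simpl. auto_derive; auto. ring.
  - simpl. apply (is_derive_plus (fun x => sum_f_R0 (fun k => a k * cos (INR k * x) + b k * sin (INR k * x)) n)); auto.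
    auto_derive; auto. ring.
Qed.

Lemma cos_npi p : cos (INR p * PI) = (-1) ^ p.
Proof.
  induction p as [|p IH]. simpl. rewrite Rmult_0_l. apply cos_0.
  rewrite S_INR. replace ((INR p + 1) * PI) with (INR p * PI + PI) by ring.
  rewrite neg_cos, IH. simpl. ring.
Qed.

Lemma sin_npi p : sin (INR p * PI) = 0.
Proof.
  induction p as [|p IH]. simpl. rewrite Rmult_0_l. apply sin_0.
  rewrite S_INR. replace ((INR p + 1) * PI) with (INR p * PI + PI) by ring.
  rewrite neg_sin, IH. ring.
Qed.

Lemma sin_npi_plus p y : sin (INR p * PI + y) = (-1) ^ p * sin y.
Proof. rewrite sin_plus, sin_npi, cos_npi. ring. Qed.

Lemma cos_cos a b : cos a * cos b = (cos (a + b) + cos (a - b)) / 2.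
Proof. rewrite cos_plus, cos_minus. field. Qed.

Lemma cos_mul_sin a c : cos a * sin c = (sin (c + a) + sin (c - a)) / 2.
Proof. rewrite sin_plus, sin_minus. field. Qed.

Lemma tele_cos beta N :
  2 * sin (beta / 2) * sum_f_R0 (fun k => cos (INR k * beta)) N
  = sin ((INR N + /2) * beta) + sin (beta / 2).
Proof.
  induction N as [|N IH].
  - simpl. rewrite Rmult_0_l, cos_0. replace ((0 + /2) * beta) with (beta/2) by field. ring.
  - rewrite tech5, Rmult_plus_distr_l, IH, S_INR.
    replace ((INR N + 1 + /2) * beta) with ((INR N + 1) * beta + beta / 2) by field.
    replace ((INR N + /2) * beta) with ((INR N + 1) * beta - beta / 2) by field.
    rewrite sin_plus, sin_minus. ring.
Qed.

Lemma tele_alt beta N :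
  2 * cos (beta / 2) * sum_f_R0 (fun k => cos (INR k * PI) * sin (INR k * beta)) N
  = cos (INR N * PI) * sin ((INR N + /2) * beta) - sin (beta / 2).
Proof.
  induction N as [|N IH].
  - simpl. rewrite !Rmult_0_l, cos_0, sin_0. replace ((0 + /2) * beta) with (beta/2) by field. ring.
  - rewrite tech5, Rmult_plus_distr_l, IH, S_INR.
    replace ((INR N + 1) * PI) with (INR N * PI + PI) by ring. rewrite neg_cos.
    replace ((INR N + 1 + /2) * beta) with ((INR N + 1) * beta + beta / 2) by field.
    replace ((INR N + /2) * beta) with ((INR N + 1) * beta - beta / 2) by field.
    rewrite sin_plus, sin_minus. ring.
Qed.

Definition tg (M k : nat) : R := INR k * PI / INR M.
Definition Hs (M : nat) (f : R -> R) : R :=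
  sum_f_R0 (fun k => f (tg M k)) M - (f (tg M 0) + f (tg M M)) / 2.

Lemma tg0 M : tg M 0 = 0.
Proof. unfold tg. simpl. unfold Rdiv. ring. Qed.
Lemma tgM M : (1 <= M)%nat -> tg M M = PI.
Proof. intro H. unfold tg. field. apply not_0_INR. lia. Qed.

Lemma tg_range M k : (1 <= M)%nat -> (k <= M)%nat -> 0 <= tg M k <= PI.
Proof.
  intros H1 H2. unfold tg. assert (0 < INR M) by (apply lt_0_INR; lia).
  assert (INR k <= INR M) by (apply le_INR; lia). assert (0 <= INR k) by apply pos_INR.
  assert (0 < PI) by apply PI_RGT_0. split.
  - apply Rmult_le_pos. nra. left. now apply Rinv_0_lt_compat.
  - apply (Rmult_le_reg_r (INR M)); auto. field_simplify; nra.
Qed.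

Lemma Hs_ext M f g : (forall x, f x = g x) -> Hs M f = Hs M g.
Proof. intro E. unfold Hs. rewrite !E. f_equal. apply sum_eq. intros; apply E. Qed.

Lemma Hs_lin M f g p q : Hs M (fun x => p * f x + q * g x) = p * Hs M f + q * Hs M g.
Proof.
  unfold Hs. rewrite sum_plus.
  rewrite (sum_eq (fun k => p * f (tg M k)) (fun k => f (tg M k) * p)) by (intros; ring).
  rewrite (sum_eq (fun k => q * g (tg M k)) (fun k => g (tg M k) * q)) by (intros; ring).
  rewrite <- !scal_sum. field.
Qed.

Lemma Hs_add M f g : Hs M (fun x => f x + g x) = Hs M f + Hs M g.
Proof. rewrite (Hs_ext M _ (fun x => 1 * f x + 1 * g x)) by (intro; ring). rewrite Hs_lin. ring. Qed.
Lemma Hs_scal M f p : Hs M (fun x => p * f x) = p * Hs M f.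
Proof.
  unfold Hs. rewrite (sum_eq (fun k => p * f (tg M k)) (fun k => f (tg M k) * p)) by (intros; ring).
  rewrite <- scal_sum. field.
Qed.

Lemma Hs_sum M (g : nat -> R -> R) N :
  Hs M (fun x => sum_f_R0 (fun i => g i x) N) = sum_f_R0 (fun i => Hs M (g i)) N.
Proof.
  induction N as [|N IH]. simpl. reflexivity.
  simpl. rewrite Hs_add, IH. reflexivity.
Qed.

Lemma Hs_const M c : Hs M (fun _ => c) = c * INR M.
Proof. unfold Hs. rewrite sum_cte, S_INR. field. Qed.

Lemma Hs_alt M f : (2 <= M)%nat ->
  Hs M f = (f (tg M 0) + f (tg M M)) / 2 + sum_f_R0 (fun k => f (tg M (S k))) (M - 2).
Proof.
  intro H. destruct M as [|[|m]]; try lia. replace (S (S m) - 2)%nat with m by lia.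
  unfold Hs. rewrite decomp_sum by lia. simpl pred. rewrite tech5. field.
Qed.

Lemma Hs_mono M f g : (2 <= M)%nat -> (forall x, 0 <= x <= PI -> f x <= g x) -> Hs M f <= Hs M g.
Proof.
  intros H Hfg. rewrite !Hs_alt by auto.
  assert (forall k, (k <= M)%nat -> f (tg M k) <= g (tg M k)).
  { intros k Hk. apply Hfg, tg_range; lia. }
  apply Rplus_le_compat.
  - assert (f (tg M 0) <= g (tg M 0)) by (apply H0; lia).
    assert (f (tg M M) <= g (tg M M)) by (apply H0; lia). lra.
  - apply sum_Rle. intros k Hk. apply H0. lia.
Qed.

Lemma Hs_abs M f : (2 <= M)%nat -> Rabs (Hs M f) <= Hs M (fun x => Rabs (f x)).
Proof.
  intro H. apply Rabs_le. split.
  - replace (- Hs M (fun x => Rabs (f x))) with (Hs M (fun x => -1 * Rabs (f x))) by (rewrite Hs_scal; ring).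
    apply Hs_mono; auto. intros x _. generalize (Rabs_pos (f x)) (Rle_abs (- f x)); rewrite Rabs_Ropp; lra.
  - apply Hs_mono; auto. intros x _. apply Rle_abs.
Qed.

Lemma Hs_cos M p : (0 < p)%nat -> (p < 2 * M)%nat -> Hs M (fun x => cos (INR p * x)) = 0.
Proof.
  intros H1 H2. set (beta := INR p * PI / INR M).
  assert (HM : 0 < INR M) by (apply lt_0_INR; lia).
  assert (Hp : 0 < INR p) by (apply lt_0_INR; lia).
  assert (Hp2 : INR p < 2 * INR M) by (replace 2 with (INR 2) by (simpl; ring); rewrite <- mult_INR; apply lt_INR; lia).
  assert (Hs2 : 0 < sin (beta / 2)).
  { assert (HPI : 0 < PI) by apply PI_RGT_0.
    assert (Hr : INR p / (2 * INR M) < 1).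
    { apply (Rmult_lt_reg_r (2*INR M)); [lra|].
      replace (INR p / (2*INR M) * (2*INR M)) with (INR p) by (field; lra). lra. }
    assert (Hr0 : 0 < INR p / (2 * INR M)) by (apply Rdiv_lt_0_compat; lra).
    replace (beta / 2) with (INR p / (2 * INR M) * PI) by (unfold beta; field; lra).
    apply sin_gt_0; nra. }
  unfold Hs. rewrite (sum_eq _ (fun k => cos (INR k * beta))).
  2:{ intros k _. unfold tg, beta. f_equal. field. lra. }
  apply (Rmult_eq_reg_l (2 * sin (beta / 2))); [|lra].
  rewrite Rmult_minus_distr_l, tele_cos, Rmult_0_r.
  replace ((INR M + /2) * beta) with (INR p * PI + beta / 2) by (unfold beta; field; lra).
  rewrite sin_npi_plus. rewrite tg0, (tgM M) by lia.
  rewrite Rmult_0_r, cos_0, cos_npi. field.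
Qed.

Lemma cos_pos_small u : 0 <= u < PI / 2 -> 0 < cos u.
Proof. intro H. apply cos_gt_0; lra. Qed.

Lemma Hs_alt_sin M q j : M = (2 * j)%nat -> (1 <= j)%nat -> (q < M)%nat -> Nat.odd q = true ->
  Hs M (fun x => cos (INR M * x) * sin (INR q * x)) =
  - sin (INR q * PI / INR M / 2) / cos (INR q * PI / INR M / 2).
Proof.
  intros HMj Hj Hq Hodd. set (beta := INR q * PI / INR M).
  assert (HM : 0 < INR M) by (apply lt_0_INR; lia).
  assert (Hp0 : 0 <= INR q) by apply pos_INR.
  assert (Hp2 : INR q < INR M) by (apply lt_INR; lia).
  assert (HPI : 0 < PI) by apply PI_RGT_0.
  assert (Hc : 0 < cos (beta / 2)).
  { assert (Hr : INR q / (2 * INR M) < /2).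
    { apply (Rmult_lt_reg_r (2*INR M)); [lra|].
      replace (INR q / (2*INR M) * (2*INR M)) with (INR q) by (field; lra). lra. }
    assert (Hr0 : 0 <= INR q / (2 * INR M)) by (apply Rmult_le_pos; [lra|left; apply Rinv_0_lt_compat; lra]).
    replace (beta / 2) with (INR q / (2 * INR M) * PI) by (unfold beta; field; lra).
    apply cos_pos_small; split; nra. }
  unfold Hs. rewrite (sum_eq _ (fun k => cos (INR k * PI) * sin (INR k * beta))).
  2:{ intros k _. unfold tg, beta. f_equal; f_equal; field; lra. }
  rewrite tg0, (tgM M) by lia. rewrite !Rmult_0_r, sin_0, Rmult_0_r, sin_npi, Rmult_0_r.
  apply (Rmult_eq_reg_l (2 * cos (beta / 2))); [|lra].
  assert (E0 : (0 + 0) / 2 = 0) by field. rewrite E0, Rminus_0_r.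
  rewrite tele_alt.
  replace ((INR M + /2) * beta) with (INR q * PI + beta / 2) by (unfold beta; field; lra).
  rewrite sin_npi_plus, cos_npi.
  destruct (Nat.odd_spec q) as [Ho _]. destruct (Ho Hodd) as [i ->].
  rewrite HMj. replace (2 * i + 1)%nat with (S (2 * i)) by lia. rewrite pow_1_even, pow_1_odd.
  field. lra.
Qed.

Fixpoint evalc (q : list (R * nat)) (x : R) : R :=
  match q with nil => 0 | (a, j) :: r => a * cos (INR j * x) + evalc r x end.

Definition CP (m : nat) (f : R -> R) : Prop :=
  exists q, List.Forall (fun p => (snd p <= m)%nat) q /\ forall x, f x = evalc q x.

Lemma CP_ext m f g : CP m f -> (forall x, g x = f x) -> CP m g.
Proof. intros [q [H1 H2]] E. exists q. split; auto. intro x. now rewrite E. Qed.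

Lemma CP_zero m : CP m (fun _ => 0).
Proof. exists nil. split; auto. Qed.

Lemma CP_single m a j : (j <= m)%nat -> CP m (fun x => a * cos (INR j * x)).
Proof. intro H. exists ((a, j) :: nil). split. constructor; auto. intro x. simpl. ring. Qed.

Lemma CP_const m c : CP m (fun _ => c).
Proof. apply (CP_ext m (fun x => c * cos (INR 0 * x))). apply CP_single; lia.
  intro x. simpl. rewrite Rmult_0_l, cos_0. ring. Qed.

Lemma evalc_app q r x : evalc (q ++ r) x = evalc q x + evalc r x.
Proof. induction q as [|[a j] q IH]; simpl. ring. rewrite IH. ring. Qed.

Lemma CP_add m f g : CP m f -> CP m g -> CP m (fun x => f x + g x).
Proof.
  intros [q [Hq Eq]] [r [Hr Er]]. exists (q ++ r). split.
  apply List.Forall_app; auto. intro x. now rewrite evalc_app, Eq, Er.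
Qed.

Lemma CP_scal m f c : CP m f -> CP m (fun x => c * f x).
Proof.
  intros [q [Hq Eq]]. exists (map (fun p => (c * fst p, snd p)) q). split.
  - apply List.Forall_map. eapply List.Forall_impl; [|exact Hq]. simpl; auto.
  - intro x. rewrite Eq. clear Eq Hq. induction q as [|[a j] q IH]; simpl. ring. rewrite <- IH. ring.
Qed.

Lemma CP_mono m m' f : (m <= m')%nat -> CP m f -> CP m' f.
Proof.
  intros H [q [Hq Eq]]. exists q. split; auto. eapply List.Forall_impl; [|exact Hq]. simpl; intros; lia.
Qed.

Lemma CP_mulcos m c f : CP m f -> CP (m + c) (fun x => cos (INR c * x) * f x).
Proof.
  intros [q [Hq Eq]].
  apply (CP_ext _ (fun x => cos (INR c * x) * evalc q x)); [|intro; now rewrite Eq].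
  clear Eq f. induction q as [|[a j] q IH].
  - apply (CP_ext _ (fun _ => 0)). apply CP_zero. intro; simpl; ring.
  - inversion Hq; subst. simpl in H1.
    assert (HD : exists D, (D <= m + c)%nat /\ forall x, cos (INR c * x - INR j * x) = cos (INR D * x)).
    { destruct (Compare_dec.le_lt_dec c j) as [H|H].
      - exists (j - c)%nat. split. lia. intro x. rewrite minus_INR by lia.
        replace (INR c * x - INR j * x) with (- ((INR j - INR c) * x)) by ring. apply cos_neg.
      - exists (c - j)%nat. split. lia. intro x. rewrite minus_INR by lia. f_equal. ring. }
    destruct HD as [D [HD1 HD2]].
    apply (CP_ext _ (fun x => (fun x => (fun x => (a/2) * cos (INR (j + c) * x)) x + (fun x => (a/2) * cos (INR D * x)) x) x
                              + cos (INR c * x) * evalc q x)).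
    + apply CP_add; [apply CP_add|]. apply CP_single; lia. apply CP_single; lia. apply IH; auto.
    + intro x. simpl. rewrite Rmult_plus_distr_l, plus_INR, <- HD2.
      replace (cos (INR c * x) * (a * cos (INR j * x))) with (a * (cos (INR c * x) * cos (INR j * x))) by ring.
      rewrite cos_cos. replace ((INR j + INR c) * x) with (INR c * x + INR j * x) by ring. field.
Qed.

Lemma Hs_ann M m g : (m < M)%nat -> CP m g -> Hs M (fun x => cos (INR M * x) * g x) = 0.
Proof.
  intros Hm [q [Hq Eq]].
  rewrite (Hs_ext M _ (fun x => cos (INR M * x) * evalc q x)) by (intro; now rewrite Eq).
  clear Eq g. induction q as [|[a j] q IH].
  - rewrite (Hs_ext M _ (fun _ => 0)) by (intro; simpl; ring). rewrite Hs_const. ring.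
  - inversion Hq; subst. simpl in H1.
    rewrite (Hs_ext M _ (fun x => (a/2) * cos (INR (M + j) * x) + (a/2) * cos (INR (M - j) * x)
                         + cos (INR M * x) * evalc q x)).
    + rewrite !Hs_add, !Hs_scal, !Hs_cos, IH by (auto; lia). ring.
    + intro x. simpl. rewrite plus_INR, minus_INR by lia.
      replace (cos (INR M * x) * (a * cos (INR j * x) + evalc q x)) with
        (a * (cos (INR M * x) * cos (INR j * x)) + cos (INR M * x) * evalc q x) by ring.
      rewrite cos_cos. replace ((INR M + INR j) * x) with (INR M * x + INR j * x) by ring.
      replace ((INR M - INR j) * x) with (INR M * x - INR j * x) by ring. field.
Qed.

Definition Xs (s x : R) : R := 2 * asin (s * sin x).

Lemma cosX s x : -1 <= s <= 1 -> cos (Xs s x) = (1 - s ^ 2) + s ^ 2 * cos (2 * x).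
Proof.
  intro Hs. unfold Xs. rewrite cos_2a_sin, sin_asin, cos_2a_sin. ring.
  assert (H := SIN_bound x). split; nra.
Qed.

Lemma CP_cosk s : -1 <= s <= 1 -> forall k, CP (2 * k) (fun x => cos (INR k * Xs s x)).
Proof.
  intros Hs.
  assert (Hc1 : forall m f, CP m f -> CP (m + 2) (fun x => cos (Xs s x) * f x)).
  { intros m f Hf. apply (CP_ext _ (fun x => (1 - s^2) * f x + s ^ 2 * (cos (INR 2 * x) * f x))).
    apply CP_add. apply CP_scal. eapply CP_mono; [|exact Hf]. lia.
    apply CP_scal. apply CP_mulcos; auto.
    intro x. rewrite cosX by auto. simpl INR. replace (1+1) with 2 by ring. ring. }
  assert (forall k, CP (2 * k) (fun x => cos (INR k * Xs s x)) /\ CP (2 * S k) (fun x => cos (INR (S k) * Xs s x))).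
  { induction k as [|k [IH1 IH2]].
    - split. apply (CP_ext _ (fun _ => 1)). apply CP_const. intro; simpl. rewrite Rmult_0_l. apply cos_0.
      apply (CP_ext _ (fun x => cos (Xs s x) * 1)). replace (2 * 1)%nat with (0 + 2)%nat by lia.
      apply Hc1. apply CP_const. intro. simpl. rewrite Rmult_1_l, Rmult_1_r. reflexivity.
    - split; auto.
      apply (CP_ext _ (fun x => 2 * (cos (Xs s x) * cos (INR (S k) * Xs s x)) + (-1) * cos (INR k * Xs s x))).
      + apply CP_add. apply CP_scal. replace (2 * S (S k))%nat with (2 * S k + 2)%nat by lia. apply Hc1; auto.
        apply CP_scal. eapply CP_mono; [|exact IH1]. lia.
      + intro x. rewrite cos_cos. rewrite !S_INR.
        replace (Xs s x + (INR k + 1) * Xs s x) with ((INR k + 1 + 1) * Xs s x) by ring.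
        replace (Xs s x - (INR k + 1) * Xs s x) with (- (INR k * Xs s x)) by ring. rewrite cos_neg. field. }
  intro k. apply H.
Qed.

Lemma CP_SX s (a : nat -> R) n : -1 <= s <= 1 ->
  CP (2 * n) (fun x => sum_f_R0 (fun k => a k * cos (INR k * Xs s x)) n).
Proof.
  intro Hs. assert (forall N, (N <= n)%nat -> CP (2 * n) (fun x => sum_f_R0 (fun k => a k * cos (INR k * Xs s x)) N)).
  { induction N as [|N IH]; intro HN.
    - simpl. apply CP_scal. eapply CP_mono; [|apply (CP_cosk s Hs 0)]. lia.
    - simpl. apply CP_add. apply IH; lia. apply CP_scal. eapply CP_mono; [|apply (CP_cosk s Hs (S N))]. lia. }
  auto.
Qed.

Lemma sin_lower a : 0 <= a <= 1 -> a - a^3/6 <= sin a.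
Proof. intro H. assert (H1 := PI2_3_2). destruct (sin_bound a 0 ltac:(lra) ltac:(lra)) as [H2 _].
 unfold sin_approx, sin_term in H2. simpl in H2. lra. Qed.

Definition Af (l0 : nat) (x : R) : R := sum_f_R0 (fun l => cos (INR (2 * l + 1) * x)) l0.

Lemma A_sin l0 x : Af l0 x * sin x = sin (INR (2 * S l0) * x) / 2.
Proof.
  induction l0 as [|l0 IH].
  - unfold Af. simpl. replace ((1 + 1) * x) with (2 * x) by ring. rewrite sin_2a.
    replace (1 * x) with x by ring. field.
  - unfold Af in *. rewrite tech5, Rmult_plus_distr_r, IH, cos_mul_sin.
    replace (x + INR (2 * S l0 + 1) * x) with (INR (2 * S (S l0)) * x) by (rewrite !plus_INR, !mult_INR, !S_INR; simpl; ring).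
    replace (x - INR (2 * S l0 + 1) * x) with (- (INR (2 * S l0) * x)) by (rewrite !plus_INR, !mult_INR, !S_INR; simpl; ring).
    rewrite sin_neg. field.
Qed.

Lemma CP_mulA m l0 f : CP m f -> CP (m + (2 * l0 + 1)) (fun x => Af l0 x * f x).
Proof.
  intro Hf. induction l0 as [|l0 IH].
  - unfold Af. simpl. apply (CP_ext _ (fun x => cos (INR 1 * x) * f x)). apply CP_mulcos; auto.
    intro; simpl; reflexivity.
  - apply (CP_ext _ (fun x => Af l0 x * f x + cos (INR (2 * S l0 + 1) * x) * f x)).
    apply CP_add. eapply CP_mono; [|exact IH]. lia. apply CP_mulcos; auto.
    intro x. unfold Af. rewrite tech5. ring.
Qed.

Lemma Hs_coscos M p q : (0 < p + q)%nat -> (p + q < 2 * M)%nat -> (p < 2 * M)%nat -> (q < 2 * M)%nat ->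
  Hs M (fun x => cos (INR p * x) * cos (INR q * x)) = if Nat.eqb p q then INR M / 2 else 0.
Proof.
  intros H1 H2 H3 H4.
  destruct (Compare_dec.le_lt_dec p q) as [H|H].
  - rewrite (Hs_ext M _ (fun x => /2 * cos (INR (p + q) * x) + /2 * cos (INR (q - p) * x))).
    2:{ intro x. rewrite cos_cos, plus_INR, minus_INR by lia.
        replace (INR p * x - INR q * x) with (- ((INR q - INR p) * x)) by ring. rewrite cos_neg.
        replace ((INR p + INR q) * x) with (INR p * x + INR q * x) by ring. field. }
    rewrite Hs_lin, Hs_cos by lia.
    destruct (Nat.eqb_spec p q).
    + subst. replace (q - q)%nat with 0%nat by lia.
      rewrite (Hs_ext M _ (fun _ => 1)) by (intro; simpl; rewrite Rmult_0_l; apply cos_0).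
      rewrite Hs_const. field.
    + rewrite Hs_cos by lia. ring.
  - rewrite (Hs_ext M _ (fun x => /2 * cos (INR (p + q) * x) + /2 * cos (INR (p - q) * x))).
    2:{ intro x. rewrite cos_cos, plus_INR, minus_INR by lia.
        replace ((INR p + INR q) * x) with (INR p * x + INR q * x) by ring.
        replace ((INR p - INR q) * x) with (INR p * x - INR q * x) by ring. field. }
    rewrite Hs_lin, !Hs_cos by lia. destruct (Nat.eqb_spec p q). lia. ring.
Qed.

Lemma sum_kron (c : R) l N : (l <= N)%nat -> sum_f_R0 (fun i => if Nat.eqb i l then c else 0) N = c.
Proof.
  induction N as [|N IH]; intro H.
  - simpl. replace l with 0%nat by lia. reflexivity.
  - rewrite tech5. destruct (Nat.eqb_spec (S N) l).
    + subst. rewrite (sum_eq _ (fun _ => 0)). rewrite sum_cte. ring.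
      intros i Hi. destruct (Nat.eqb_spec i (S N)). lia. reflexivity.
    + rewrite IH by lia. ring.
Qed.

Lemma Hs_A2 M l0 : (2 * l0 + 1 < M)%nat ->
  Hs M (fun x => Af l0 x * Af l0 x) = INR (S l0) * INR M / 2.
Proof.
  intro H.
  rewrite (Hs_ext M _ (fun x => sum_f_R0 (fun l => sum_f_R0 (fun l' => cos (INR (2 * l + 1) * x) * cos (INR (2 * l' + 1) * x)) l0) l0)).
  2:{ intro x. unfold Af. rewrite scal_sum. apply sum_eq. intros l _.
      rewrite scal_sum. apply sum_eq. intros; ring. }
  rewrite Hs_sum. rewrite (sum_eq _ (fun _ => INR M / 2)).
  - rewrite sum_cte. field.
  - intros l Hl. rewrite Hs_sum.
    rewrite (sum_eq _ (fun l' => if Nat.eqb l' l then INR M / 2 else 0)).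
    + apply sum_kron; auto.
    + intros l' Hl'. rewrite Hs_coscos by lia.
      destruct (Nat.eqb_spec (2 * l + 1) (2 * l' + 1)); destruct (Nat.eqb_spec l' l); auto; lia.
Qed.

Lemma Hs_A2s2 M l0 : (2 * S l0 < M)%nat ->
  Hs M (fun x => Af l0 x * Af l0 x * (sin x * sin x)) = INR M / 8.
Proof.
  intro H.
  rewrite (Hs_ext M _ (fun x => /8 * 1 + (-/8) * cos (INR (4 * S l0) * x))).
  - rewrite Hs_lin, Hs_const, Hs_cos by lia. field.
  - intro x. replace (Af l0 x * Af l0 x * (sin x * sin x)) with ((Af l0 x * sin x) * (Af l0 x * sin x)) by ring.
    rewrite A_sin. replace (INR (4 * S l0) * x) with (2 * (INR (2 * S l0) * x)) by (rewrite !mult_INR; simpl; ring).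
    rewrite cos_2a_sin. field.
Qed.

Lemma P_bound M j q : M = (2 * j)%nat -> (1 <= j)%nat -> (2 * q <= M)%nat -> Nat.odd q = true ->
  Hs M (fun x => cos (INR M * x) * sin (INR q * x)) <= - (INR q * PI / INR M / 2) / 2.
Proof.
  intros HM Hj Hq Hodd. rewrite (Hs_alt_sin M q j) by first [assumption | lia | (destruct q; [discriminate|lia])].
  set (u := INR q * PI / INR M / 2).
  assert (HMr : 0 < INR M) by (apply lt_0_INR; lia).
  assert (Hu : 0 <= u <= 1).
  { assert (H2q : 2 * INR q <= INR M) by (replace 2 with (INR 2) by (simpl; ring); rewrite <- mult_INR; apply le_INR; lia).
    assert (0 <= INR q) by apply pos_INR. assert (H4 := PI_4). assert (0 < PI) by apply PI_RGT_0.
    unfold u. split.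
    - apply Rmult_le_pos; [|lra]. apply Rmult_le_pos; [nra|]. left; apply Rinv_0_lt_compat; lra.
    - replace (INR q * PI / INR M / 2) with (INR q / INR M * (PI / 2)) by (field; lra).
      assert (INR q / INR M <= /2).
      { apply (Rmult_le_reg_r (INR M)); auto. replace (INR q / INR M * INR M) with (INR q) by (field; lra). lra. }
      assert (0 <= INR q / INR M) by (apply Rmult_le_pos; [lra|left; apply Rinv_0_lt_compat; lra]).
      nra. }
  assert (Hs1 := sin_lower u Hu).
  assert (Hc : 0 < cos u) by (apply cos_gt_0; assert (H := PI2_3_2); lra).
  assert (Hc1 : cos u <= 1) by apply COS_bound.
  assert (Hu3 : u ^ 3 <= u) by (simpl; nra).
  assert (Hsp : 0 <= sin u) by lra.
  assert (sin u <= sin u / cos u).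
  { apply (Rmult_le_reg_r (cos u)); auto. replace (sin u / cos u * cos u) with (sin u) by (field; lra). nra. }
  assert (u ^ 3 / 6 <= u / 2) by (simpl; nra). lra.
Qed.

Lemma sum_mult_r (An : nat -> R) N c : sum_f_R0 An N * c = sum_f_R0 (fun i => An i * c) N.
Proof. rewrite Rmult_comm, scal_sum. reflexivity. Qed.

Lemma Lambda_sin M j l0 : M = (2 * j)%nat -> (1 <= j)%nat -> (8 * l0 + 6 <= M)%nat ->
  Hs M (fun x => cos (INR M * x) * (Af l0 x * Af l0 x) * sin x)
  <= - (INR (S l0) * INR (S l0) * PI / (8 * INR M)).
Proof.
  intros HM Hj HL.
  assert (HMr : 0 < INR M) by (apply lt_0_INR; lia).
  rewrite (Hs_ext M _ (fun x => sum_f_R0 (fun l =>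
      /4 * (cos (INR M * x) * sin (INR (2 * (l0 + l + 1) + 1) * x))
    + /4 * (cos (INR M * x) * sin (INR (2 * (l0 - l) + 1) * x))) l0)).
  2:{ intro x. rewrite Rmult_assoc, (Rmult_assoc (Af l0 x)), A_sin.
      unfold Af. rewrite sum_mult_r, scal_sum. apply sum_eq.
      intros i Hi. replace (cos (INR (2 * i + 1) * x) * (sin (INR (2 * S l0) * x) / 2) * cos (INR M * x))
        with (cos (INR M * x) * (cos (INR (2 * i + 1) * x) * sin (INR (2 * S l0) * x)) / 2) by (unfold Rdiv; ring).
      rewrite cos_mul_sin.
      replace (INR (2 * S l0) * x + INR (2 * i + 1) * x) with (INR (2 * (l0 + i + 1) + 1) * x)
        by (rewrite !plus_INR, !mult_INR, !S_INR, !plus_INR; simpl; ring).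
      replace (INR (2 * S l0) * x - INR (2 * i + 1) * x) with (INR (2 * (l0 - i) + 1) * x).
      2:{ rewrite <- Rmult_minus_distr_r. f_equal. rewrite <- minus_INR by lia. f_equal. lia. }
      field. }
  rewrite Hs_sum.
  eapply Rle_trans.
  - apply (sum_Rle _ (fun _ => /4 * (- (INR (S l0) * PI / (2 * INR M))) + /4 * 0)).
    intros l Hl. rewrite Hs_lin. apply Rplus_le_compat; apply Rmult_le_compat_l; try lra.
    + eapply Rle_trans. apply (P_bound M j); auto; try lia.
      rewrite Nat.odd_add, Nat.odd_mul. reflexivity.
      assert (INR (2 * S l0) <= INR (2 * (l0 + l + 1) + 1)) by (apply le_INR; lia).
      rewrite mult_INR in H. simpl (INR 2) in H. assert (0 < PI) by apply PI_RGT_0.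
      apply Ropp_le_contravar in H. 
      apply (Rmult_le_reg_r (4 * INR M)). lra.
      replace (- (INR (2 * (l0 + l + 1) + 1) * PI / INR M / 2) / 2 * (4 * INR M)) with (- INR (2 * (l0 + l + 1) + 1) * PI) by (field; lra).
      replace (- (INR (S l0) * PI / (2 * INR M)) * (4 * INR M)) with (- ((1+1) * INR (S l0)) * PI) by (field; lra).
      apply Rmult_le_compat_r; lra.
    + eapply Rle_trans. apply (P_bound M j); auto; try lia.
      rewrite Nat.odd_add, Nat.odd_mul. reflexivity.
      assert (0 <= INR (2 * (l0 - l) + 1)) by apply pos_INR. assert (0 < PI) by apply PI_RGT_0.
      assert (0 <= INR (2 * (l0 - l) + 1) * PI / INR M / 2).
      { apply Rmult_le_pos; [|lra]. apply Rmult_le_pos. nra. left; apply Rinv_0_lt_compat; lra. }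
      lra.
  - rewrite sum_cte. right. field. lra.
Qed.

Lemma asin_est y : 0 <= y <= /10 -> y <= asin y <= 2 * y /\ asin y - y <= 4 / 3 * y ^ 3.
Proof.
  intro Hy. set (th := asin y).
  assert (Hb := asin_bound y). fold th in Hb.
  assert (Hs : sin th = y) by (apply sin_asin; lra).
  assert (HPI := PI2_3_2).
  assert (H0 : 0 <= th).
  { apply sin_incr_0; try lra. rewrite sin_0. lra. }
  assert (Hs1 := sin_lower 1 ltac:(lra)).
  assert (H1 : th <= 1).
  { simpl in Hs1. apply sin_incr_0; lra. }
  assert (H2 : y <= th).
  { destruct (Req_dec th 0) as [E|E]. rewrite E, sin_0 in Hs. lra.
    rewrite <- Hs. left. apply sin_lt_x. lra. }
  assert (H3 := sin_lower th ltac:(lra)). rewrite Hs in H3.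
  assert (H4 : th <= 2 * y) by (simpl in H3; nra).
  split. lra.
  assert (th ^ 3 <= (2 * y) ^ 3) by (apply pow_incr; lra).
  simpl in *. lra.
Qed.

Lemma even_part b n T : 0 < b -> trig_poly n T -> exists a : nat -> R,
  forall y, -b <= y <= b ->
  Rabs (sum_f_R0 (fun k => a k * cos (INR k * y)) n - Rabs y) <= supnorm (fun x => Rabs x - T x) (-b) b.
Proof.
  intros Hb HT. destruct (trig_bounded n T HT) as [MT HMT].
  destruct HT as [a [bb HT]]. exists a. intros y Hy.
  assert (HE : forall y, -b <= y <= b -> Rabs (Rabs y - T y) <= supnorm (fun x => Rabs x - T x) (-b) b).
  { intros z Hz. apply (supnorm_ge (fun x => Rabs x - T x) (-b) b (b + MT) z); auto.
    intros w Hw. eapply Rle_trans. apply Rabs_triang. rewrite Rabs_Ropp, Rabs_Rabsolu.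
    apply Rplus_le_compat. apply Rabs_le; lra. apply HMT. }
  assert (HS : sum_f_R0 (fun k => a k * cos (INR k * y)) n = (T y + T (- y)) / 2).
  { rewrite !HT, <- sum_plus. unfold Rdiv. rewrite Rmult_comm, scal_sum. apply sum_eq. intros k _.
    replace (INR k * - y) with (- (INR k * y)) by ring. rewrite cos_neg, sin_neg. field. }
  rewrite HS. assert (H1 := HE y Hy). assert (H2 := HE (-y) ltac:(lra)). rewrite Rabs_Ropp in H2.
  apply Rabs_le. apply Rabs_le_between in H1. apply Rabs_le_between in H2. lra.
Qed.

Lemma part1 : forall (b : R) (n : nat) (T : R -> R),
  0 < b <= PI -> (1 <= n)%nat -> trig_poly n T ->
  supnorm (fun x => Rabs x - T x) (- b) b >= / 6000 * b / INR n.
Proof.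
  intros b n T Hb Hn HT. destruct n as [|l0]; [lia|].
  set (N := INR (S l0)).
  assert (HN : 1 <= N) by (unfold N; rewrite S_INR; generalize (pos_INR l0); lra).
  set (M := (8 * S l0)%nat).
  assert (HMN : INR M = 8 * N) by (unfold M, N; rewrite mult_INR; simpl; ring).
  set (E := supnorm (fun x => Rabs x - T x) (- b) b).
  destruct (even_part b (S l0) T ltac:(lra) HT) as [a Ha]. fold E in Ha.
  assert (H4 := PI_4). assert (H3 := PI2_3_2).
  set (s := sin (b / 40)).
  assert (Hs_lo : b / 80 <= s).
  { assert (H := sin_lower (b/40) ltac:(split; lra)). fold s in H.
    assert ((b/40)^3/6 <= (b/40)/2) by (simpl; nra). lra. }
  assert (Hs_hi2 : s <= b / 40) by (left; apply sin_lt_x; lra).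
  assert (Hs_hi : s <= /10) by lra.
  assert (Hs_pos : 0 < s) by lra.
  assert (Hs1 : -1 <= s <= 1) by lra.
  set (X := Xs s).
  set (SX := fun x => sum_f_R0 (fun k => a k * cos (INR k * X x)) (S l0)).
  set (G := fun x => cos (INR M * x) * (Af l0 x * Af l0 x)).
  assert (HM2 : (2 <= M)%nat) by (unfold M; lia).
  assert (Hy : forall x, 0 <= x <= PI -> 0 <= s * sin x <= /10 /\ sin x <= 1 /\ 0 <= sin x).
  { intros x Hx. assert (0 <= sin x) by (apply sin_ge_0; lra). assert (Hsb := SIN_bound x).
    split; [split; nra|split; lra]. }
  assert (HX : forall x, 0 <= x <= PI -> 0 <= X x <= b /\ Rabs (X x - 2 * s * sin x) <= 8/3 * s^3 * (sin x * sin x)).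
  { intros x Hx. destruct (Hy x Hx) as [Hy1 [Hy2 Hy3]].
    destruct (asin_est (s * sin x) Hy1) as [[A1 A2] A3].
    assert (s * sin x <= s) by nra.
    unfold X, Xs. split. split; lra.
    rewrite Rabs_right by nra.
    assert ((s * sin x)^3 <= s^3 * (sin x * sin x)).
    { replace ((s * sin x)^3) with (s^3 * (sin x * sin x) * sin x) by ring.
      assert (0 <= s^3 * (sin x * sin x)) by (apply Rmult_le_pos; [apply pow_le; lra| nra]). nra. }
    lra. }
  assert (Step1 : Hs M (fun x => G x * SX x) = 0).
  { rewrite (Hs_ext M _ (fun x => cos (INR M * x) * (Af l0 x * (Af l0 x * SX x)))) by (intro; unfold G; ring).
    apply (Hs_ann M (2 * S l0 + (2 * l0 + 1) + (2 * l0 + 1))). unfold M; lia.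
    apply CP_mulA, CP_mulA. apply CP_SX; auto. }
  assert (Step3 : Rabs (Hs M (fun x => G x * (X x - SX x))) <= E * (N * INR M / 2)).
  { eapply Rle_trans. apply Hs_abs; auto.
    replace (E * (N * INR M / 2)) with (E * Hs M (fun x => Af l0 x * Af l0 x))
      by (rewrite Hs_A2 by (unfold M; lia); reflexivity). rewrite <- Hs_scal.
    apply Hs_mono; auto. intros x Hx. unfold G.
    rewrite !Rabs_mult. destruct (HX x Hx) as [[X1 X2] _].
    assert (Hc := COS_bound (INR M * x)).
    assert (Hd : Rabs (X x - SX x) <= E).
    { rewrite Rabs_minus_sym. rewrite <- (Rabs_right (X x)) at 1 by lra. unfold SX. apply Ha. lra. }
    assert (0 <= Rabs (Af l0 x) * Rabs (Af l0 x)) by (apply Rmult_le_pos; apply Rabs_pos).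
    rewrite <- Rabs_mult. rewrite (Rabs_right (Af l0 x * Af l0 x)) by nra.
    assert (Rabs (cos (INR M * x)) <= 1) by (apply Rabs_le; lra).
    assert (0 <= Af l0 x * Af l0 x) by nra.
    assert (0 <= Rabs (cos (INR M * x))) by apply Rabs_pos.
    assert (0 <= Rabs (X x - SX x)) by apply Rabs_pos.
    assert (Rabs (cos (INR M * x)) * (Af l0 x * Af l0 x) * Rabs (X x - SX x) <= 1 * (Af l0 x * Af l0 x) * E) by (apply Rmult_le_compat; try nra). lra. }
  assert (Step4 : Rabs (Hs M (fun x => G x * (X x - 2 * s * sin x))) <= 8/3 * s^3 * (INR M / 8)).
  { eapply Rle_trans. apply Hs_abs; auto.
    rewrite <- (Hs_A2s2 M l0) by (unfold M; lia). rewrite <- Hs_scal.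
    apply Hs_mono; auto. intros x Hx. unfold G.
    rewrite !Rabs_mult. destruct (HX x Hx) as [_ Hd].
    assert (Hc := COS_bound (INR M * x)).
    rewrite <- Rabs_mult. rewrite (Rabs_right (Af l0 x * Af l0 x)) by nra.
    assert (Rabs (cos (INR M * x)) <= 1) by (apply Rabs_le; lra).
    assert (0 <= Af l0 x * Af l0 x) by nra.
    assert (0 <= Rabs (cos (INR M * x))) by apply Rabs_pos.
    assert (0 <= Rabs (X x - 2 * s * sin x)) by apply Rabs_pos.
    assert (Rabs (cos (INR M * x)) * (Af l0 x * Af l0 x) * Rabs (X x - 2 * s * sin x)
            <= 1 * (Af l0 x * Af l0 x) * (8 / 3 * s ^ 3 * (sin x * sin x))).
    { apply Rmult_le_compat; try nra. }
    lra. }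
  assert (Step5 : Hs M (fun x => G x * sin x) <= - (N * N * PI / (8 * INR M))).
  { apply (Lambda_sin M (4 * S l0)); unfold M; lia. }
  assert (Hdec : Hs M (fun x => G x * (X x - SX x)) =
                 2 * s * Hs M (fun x => G x * sin x) + 1 * Hs M (fun x => G x * (X x - 2 * s * sin x))
                 - Hs M (fun x => G x * SX x)).
  { rewrite <- Hs_lin.
    rewrite (Hs_ext M (fun x => G x * (X x - SX x))
      (fun x => 1 * (2 * s * (G x * sin x) + 1 * (G x * (X x - 2 * s * sin x))) + (-1) * (G x * SX x)))
      by (intro; ring).
    rewrite Hs_lin. ring. }
  rewrite Step1 in Hdec.
  rewrite HMN in Step3, Step4, Step5.
  set (P := Hs M (fun x => G x * sin x)) in *.
  set (D := Hs M (fun x => G x * (X x - 2 * s * sin x))) in *.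
  set (R0 := Hs M (fun x => G x * (X x - SX x))) in *.
  assert (HP : P <= - (N * PI / 64)).
  { replace (- (N * N * PI / (8 * (8 * N)))) with (- (N * PI / 64)) in Step5 by (field; lra). exact Step5. }
  apply Rabs_le_between in Step3. apply Rabs_le_between in Step4.
  replace (8 / 3 * s ^ 3 * (8 * N / 8)) with (8/3 * s^3 * N) in Step4 by field.
  replace (E * (N * (8 * N) / 2)) with (4 * N * N * E) in Step3 by field.
  assert (Hk : 4 * N * N * E >= s * N / 16).
  { assert (s ^ 3 <= s / 100) by (simpl; nra).
    assert (2 * s * P <= - (2 * s * (N * PI / 64))) by nra.
    assert (3 * N <= N * PI) by nra.
    assert (8 / 3 * s ^ 3 * N <= 8/300 * s * N) by nra.
    nra. }
  assert (HE : s <= 64 * N * E).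
  { apply (Rmult_le_reg_l (N / 16)). nra. nra. }
  apply Rle_ge. unfold Rdiv.
  apply (Rmult_le_reg_l (64 * N)). nra.
  replace (64 * N * (/ 6000 * b * / N)) with (64 / 6000 * b) by (field; lra). lra.
Qed.

Lemma PI_gt_3 : 3 < PI.
Proof. generalize PI2_3_2; lra. Qed.

Lemma trig_ext n f g : trig_poly n f -> (forall x, g x = f x) -> trig_poly n g.
Proof. intros [a [b H]] E. exists a, b. intro x. now rewrite E. Qed.

Lemma INR_ge1 n : (1 <= n)%nat -> 1 <= INR n.
Proof. intro H. apply le_INR in H. simpl in H. exact H. Qed.

Lemma c0_ge_1 c0 : bernstein_const c0 -> 1 <= c0.
Proof.
  intro HB.
  assert (Ht : trig_poly 1 sin).
  { exists (fun _ => 0), (fun k => match k with 1%nat => 1 | _ => 0 end).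
    intro x. simpl. rewrite Rmult_1_l. ring. }
  assert (Ho : odd_fun sin) by (intro; apply sin_neg).
  specialize (HB 1 1%nat sin). assert (H3 := PI_gt_3).
  assert (HD : forall y, Derive sin y = cos y).
  { intro y. apply is_derive_unique. auto_derive; auto. ring. }
  assert (H1 : 1 <= supnorm (Derive sin) (-1/2) (1/2)).
  { replace 1 with (Rabs (Derive sin 0)) at 1.
    - apply (supnorm_ge _ _ _ 1). intros y _. rewrite HD. apply Rabs_le, COS_bound. lra.
    - rewrite HD, cos_0. apply Rabs_R1. }
  assert (H2 : supnorm sin (-1) 1 <= 1).
  { apply supnorm_le. lra. intros y _. apply Rabs_le, SIN_bound. }
  assert (H01 : 0 < 1 < PI) by lra. assert (H4 := HB H01 (le_n _) Ht Ho).
  simpl INR in H4. replace (- (1)) with (-1) in H4 by ring.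
  assert (0 <= supnorm sin (-1) 1).
  { eapply Rle_trans. apply Rabs_pos. apply (supnorm_ge _ _ _ 1 0).
    intros y _. apply Rabs_le, SIN_bound. lra. }
  replace (c0 / 1 * 1) with c0 in H4 by field.
  assert (H5 : 1 <= c0 * supnorm sin (-1) 1) by (eapply Rle_trans; [exact H1|exact H4]). destruct (Rle_or_lt 0 c0); nra.
Qed.

Lemma part2 c0 : 0 < c0 -> bernstein_const c0 ->
     forall (b : R) (n : nat) (T : R -> R),
       0 < b <= PI -> (1 <= n)%nat -> trig_poly n T ->
       supnorm (fun x => Rabs x - T x) (- b) b >= / (80 * c0) * b / INR n.
Proof.
  intros Hc0 HB b n T Hb Hn HT.
  assert (Hc1 := c0_ge_1 c0 HB).
  assert (HN := INR_ge1 n Hn). set (N := INR n) in *.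
  set (K := c0 * N).
  assert (HK : 1 <= K). { unfold K. rewrite <- (Rmult_1_r 1). apply Rmult_le_compat; lra. }
  set (E := supnorm (fun x => Rabs x - T x) (- b) b).
  destruct (trig_bounded n T HT) as [MT HMT].
  assert (HE : forall y, -b <= y <= b -> Rabs (Rabs y - T y) <= E).
  { intros y Hy. apply (supnorm_ge (fun x => Rabs x - T x) (-b) b (b + MT) y); auto.
    intros z Hz. eapply Rle_trans. apply Rabs_triang. rewrite Rabs_Ropp, Rabs_Rabsolu.
    apply Rplus_le_compat. apply Rabs_le; lra. apply HMT. }
  set (S := fun y => (T y + T (- y)) / 2).
  assert (HS : forall y, -b <= y <= b -> Rabs (S y - Rabs y) <= E).
  { intros y Hy. unfold S.
    assert (H1 := HE y Hy). assert (H2 := HE (-y) ltac:(lra)). rewrite Rabs_Ropp in H2.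
    apply Rabs_le. apply Rabs_le_between in H1. apply Rabs_le_between in H2. lra. }
  set (h := b / (2 * K + 1)).
  assert (Hh : 0 < h). { unfold h. apply Rdiv_lt_0_compat; lra. }
  set (beta := b - h).
  assert (Hbeta : beta = 2 * K * h). { unfold beta, h. field. lra. }
  assert (Hhb : h <= beta / 2). { rewrite Hbeta. nra. }
  assert (Hbpos : 0 < beta) by nra.
  assert (Hbpi : beta < PI) by (unfold beta; lra).
  set (W := fun x => S (x + h) - S (x - h)).
  assert (HW : trig_poly n W).
  { apply (trig_ext n (fun x => (/2) * ((fun x => 1 * T (x + h) + 1 * T (- (x + h))) x)
                              + (-/2) * ((fun x => 1 * T (x - h) + 1 * T (- (x - h))) x))).
    - apply trig_lin; apply trig_lin.
      + now apply trig_shift.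
      + apply (trig_shift n (fun x => T (- x))). now apply trig_neg.
      + now apply (trig_shift n T (-h)).
      + apply (trig_shift n (fun x => T (- x)) (-h)). now apply trig_neg.
    - intro x. unfold W, S. simpl. replace (x + - h) with (x - h) by ring. field. }
  assert (HWo : odd_fun W).
  { intro x. unfold W, S. replace (- x + h) with (- (x - h)) by ring.
    replace (- x - h) with (- (x + h)) by ring. rewrite !Ropp_involutive. field. }
  destruct (trig_deriv n W HW) as [W' [HW' HdW]].
  destruct (trig_bounded n W' HW') as [MW' HMW'].
  assert (HB1 := HB beta n W (conj Hbpos Hbpi) Hn HW HWo).
  assert (HWb : supnorm W (- beta) beta <= 2 * h + 2 * E).
  { apply supnorm_le. lra. intros x Hx. unfold W.
    assert (H1 := HS (x + h) ltac:(unfold beta in Hx; lra)).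
    assert (H2 := HS (x - h) ltac:(unfold beta in Hx; lra)).
    apply Rabs_le_between in H1. apply Rabs_le_between in H2. apply Rabs_le.
    unfold Rabs in *; repeat destruct Rcase_abs; lra. }
  destruct (MVT_cor2 W W' 0 h Hh) as [xi [Hxi Hxi']].
  { intros c _. apply is_derive_Reals. apply HdW. }
  assert (HW0 : W 0 = 0). { assert (H := HWo 0). rewrite Ropp_0 in H. lra. }
  assert (HWh : 2 * h - 2 * E <= W h).
  { unfold W. assert (H1 := HS (h + h) ltac:(unfold beta in Hhb; lra)). assert (H2 := HS (h - h) ltac:(unfold beta in Hhb; lra)).
    apply Rabs_le_between in H1. apply Rabs_le_between in H2.
    replace (h - h) with 0 in * by ring. rewrite Rabs_R0 in H2.
    rewrite (Rabs_right (h + h)) in H1 by lra. lra. }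
  assert (HDer : Rabs (W' xi) <= supnorm (Derive W) (- beta / 2) (beta / 2)).
  { replace (W' xi) with (Derive W xi) by (apply is_derive_unique; apply HdW).
    apply (supnorm_ge _ _ _ MW'). intros y _. rewrite (is_derive_unique _ _ _ (HdW y)). apply HMW'.
    split; lra. }
  assert (HEpos : 0 <= E).
  { eapply Rle_trans. apply Rabs_pos. apply HE with (y := 0). lra. }
  assert (Hc : c0 / beta * N = / (2 * h)).
  { rewrite Hbeta. unfold K. field. lra. }
  change (INR n) with N in HB1. rewrite Hc in HB1.
  assert (Hfin : W' xi * h <= h + E).
  { assert (W' xi <= / (2 * h) * (2 * h + 2 * E)).
    { eapply Rle_trans. apply Rle_abs. eapply Rle_trans. apply HDer. eapply Rle_trans. apply HB1.
      apply Rmult_le_compat_l. left. apply Rinv_0_lt_compat. lra. exact HWb. }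
    replace (h + E) with (/ (2 * h) * (2 * h + 2 * E) * h) by (field; lra).
    apply Rmult_le_compat_r; lra. }
  assert (HE3 : h / 3 <= E) by lra.
  apply Rle_ge. eapply Rle_trans; [|exact HE3].
  unfold h. unfold K in *.
  replace (/ (80 * c0) * b / N) with (b / (80 * (c0 * N))) by (field; lra).
  unfold Rdiv. rewrite Rmult_assoc. apply Rmult_le_compat_l. lra.
  rewrite <- Rinv_mult. apply Rinv_le_contravar. nra. nra.
Qed.


Theorem lemma3p3 :
  (exists c1 : R, 0 < c1 /\
     forall (b : R) (n : nat) (T : R -> R),
       0 < b <= PI -> (1 <= n)%nat -> trig_poly n T ->
       supnorm (fun x => Rabs x - T x) (- b) b >= c1 * b / INR n)
  /\
  (forall c0 : R, 0 < c0 -> bernstein_const c0 ->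
     forall (b : R) (n : nat) (T : R -> R),
       0 < b <= PI -> (1 <= n)%nat -> trig_poly n T ->
       supnorm (fun x => Rabs x - T x) (- b) b >= / (80 * c0) * b / INR n).
Proof.
  split.
  - exists (/ 6000). split. lra. exact part1.
  - exact part2.
Qed.
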